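(* Every real CPS tensor $\mathcal{A}\in\mathbb{R}^{n\times n\times n\times n}$ admits a decomposition \[ \mathcal{A}=\sum_{i=1}^r\lambda_i\, a_i\otimes a_i\otimes b_i\otimes b_i, \] with $\lambda_i\in\mathbb{R}$ and $a_i,b_i\in\mathbb{R}^n$ for $i=1,\dots,r$.
   Context: A real tensor $\mathcal{A}\in\mathbb{R}^{n\times n\times n\times n}$ is (real) conjugate partial-symmetric (CPS) if $\mathcal{A}_{ijkl}=\mathcal{A}_{klij}=\mathcal{A}_{jikl}=\mathcal{A}_{ijlk}$ for all indices. $(u\otimes v\otimes w\otimes z)_{ijkl}=u_iv_jw_kz_l$. *)

(* Defs.v *)
From mathcomp Require Import all_boot all_algebra.
Set Implicit Arguments. Unset Strict Implicit. Unset Printing Implicit Defensive.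
Import GRing.Theory Num.Theory.
Local Open Scope ring_scope.

Definition tensor4 (R : Type) (n : nat) := 'I_n -> 'I_n -> 'I_n -> 'I_n -> R.

Definition is_CPS (R : Type) (n : nat) (A : tensor4 R n) : Prop :=
  forall i j k l : 'I_n,
    A i j k l = A k l i j /\ A i j k l = A j i k l /\ A i j k l = A i j l k.

Definition outer4 (R : nzRingType) (n : nat) (u v w z : 'rV[R]_n) : tensor4 R n :=
  fun i j k l => u 0 i * v 0 j * w 0 k * z 0 l.

(* Main.v *)
Require Import Defs.
From mathcomp Require Import all_boot all_algebra.
From mathcomp Require Import ring.
Import GRing.Theory Num.Theory.
Local Open Scope ring_scope.

Section Aux.
Variables (R : realFieldType) (n : nat).

Definition ftrip (x : R * 'rV[R]_n * 'rV[R]_n) : tensor4 R n :=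
  fun p q u v => x.1.1 * outer4 x.1.2 x.1.2 x.2 x.2 p q u v.

Definition rep (T : tensor4 R n) := exists s : seq (R * 'rV[R]_n * 'rV[R]_n),
  forall p q u v, T p q u v = \sum_(x <- s) ftrip x p q u v.

Lemma rep_seq (I : Type) (r : seq I) (G : I -> tensor4 R n) :
  (forall x, rep (G x)) -> rep (fun p q u v => \sum_(x <- r) G x p q u v).
Proof.
move=> HG; elim: r => [|x r [s Hs]].
  by exists [::] => p q u v; rewrite !big_nil.
have [s1 Hs1] := HG x.
exists (s1 ++ s) => p q u v; by rewrite big_cons big_cat /= Hs1 Hs.
Qed.

Lemma rep_sum (I : finType) (G : I -> tensor4 R n) :
  (forall x, rep (G x)) -> rep (fun p q u v => \sum_(x : I) G x p q u v).
Proof. exact: rep_seq. Qed.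

Lemma rep1 x : rep (ftrip x).
Proof. by exists [:: x] => p q u v; rewrite big_seq1. Qed.

Definition S4 (F : 'I_n -> 'I_n -> 'I_n -> 'I_n -> R) :=
  \sum_i \sum_j \sum_k \sum_l F i j k l.

Lemma S4_ext F G : (forall i j k l, F i j k l = G i j k l) -> S4 F = S4 G.
Proof.
move=> H; apply: eq_bigr => i _; apply: eq_bigr => j _; apply: eq_bigr => k _.
by apply: eq_bigr => l _.
Qed.

Lemma S4_add F G : S4 (fun i j k l => F i j k l + G i j k l) = S4 F + S4 G.
Proof.
rewrite /S4 -big_split; apply: eq_bigr => i _; rewrite -big_split.
apply: eq_bigr => j _; rewrite -big_split; apply: eq_bigr => k _.
by rewrite -big_split.
Qed.

Lemma sum_delta (G : 'I_n -> R) p : \sum_i G i * (p == i)%:R = G p.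
Proof.
rewrite (bigD1 p) //= eqxx mulr1 big1 ?addr0 // => i /negbTE Hi.
by rewrite eq_sym Hi mulr0.
Qed.

Lemma S4_delta F p q u v :
  S4 (fun i j k l => F i j k l * ((p == i)%:R * (q == j)%:R * (u == k)%:R * (v == l)%:R))
  = F p q u v.
Proof.
rewrite /S4.
transitivity (\sum_i (\sum_j \sum_k \sum_l F i j k l * ((q == j)%:R * (u == k)%:R * (v == l)%:R)) * (p == i)%:R).
  apply: eq_bigr => i _; rewrite big_distrl; apply: eq_bigr => j _.
  rewrite big_distrl; apply: eq_bigr => k _; rewrite big_distrl.
  by apply: eq_bigr => l _ /=; ring.
rewrite sum_delta.
transitivity (\sum_j (\sum_k \sum_l F p j k l * ((u == k)%:R * (v == l)%:R)) * (q == j)%:R).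
  apply: eq_bigr => j _; rewrite big_distrl; apply: eq_bigr => k _.
  rewrite big_distrl; by apply: eq_bigr => l _ /=; ring.
rewrite sum_delta.
transitivity (\sum_k (\sum_l F p q k l * (v == l)%:R) * (u == k)%:R).
  apply: eq_bigr => k _; rewrite big_distrl; by apply: eq_bigr => l _ /=; ring.
by rewrite sum_delta sum_delta.
Qed.

Definition ev (i : 'I_n) : 'rV[R]_n := \row_m ((m == i)%:R).
Definition sg (b : bool) : R := if b then 1 else -1.

End Aux.
Arguments S4 {R n} F.
Arguments rep {R n} T.
Arguments rep_sum {R n I} G.
Arguments rep1 {R n} x.
Arguments S4_ext {R n} F G.
Arguments S4_delta {R n} F p q u v.

Theorem theorem3p4 (R : realFieldType) (n : nat) (A : tensor4 R n) :
  is_CPS A ->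
  exists (r : nat) (lambda : 'I_r -> R) (a b : 'I_r -> 'rV[R]_n),
    forall i j k l : 'I_n,
      A i j k l = \sum_(s < r) lambda s * outer4 (a s) (a s) (b s) (b s) i j k l.
Proof.
move=> HA.
pose tm (i j k l : 'I_n) (b c : bool) :=
  (A i j k l * @sg R b * @sg R c / 16, @ev R n i + @sg R b *: @ev R n j, @ev R n k + @sg R c *: @ev R n l).
have H : forall p q u v, A p q u v =
  \sum_i \sum_j \sum_k \sum_l \sum_(b : bool) \sum_(c : bool) @ftrip R n (tm i j k l b c) p q u v.
  move=> p q u v.
  change (A p q u v = S4 (fun i j k l => \sum_(b : bool) \sum_(c : bool) @ftrip R n (tm i j k l b c) p q u v)).
  pose F4 := (fun i j k l : 'I_n => A i j k l / 4).
  transitivity (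
     S4 (fun i j k l => F4 i j k l * ((p == i)%:R * (q == j)%:R * (u == k)%:R * (v == l)%:R)) +
     S4 (fun i j k l => F4 i j k l * ((q == i)%:R * (p == j)%:R * (u == k)%:R * (v == l)%:R)) +
     S4 (fun i j k l => F4 i j k l * ((p == i)%:R * (q == j)%:R * (v == k)%:R * (u == l)%:R)) +
     S4 (fun i j k l => F4 i j k l * ((q == i)%:R * (p == j)%:R * (v == k)%:R * (u == l)%:R))); last first.
    rewrite -!S4_add; apply: S4_ext => i j k l.
    rewrite !big_bool /ftrip /outer4 /tm /sg /F4 /= !mxE /=.
    by field.
  rewrite !(S4_delta F4) /F4.
  have [_ [E1 _]] := HA q p u v.
  have [_ [_ E2]] := HA p q v u.
  have [_ [_ E3]] := HA q p v u.
  rewrite E3 E1 E2; by field.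
have [s Hs0] : rep (fun p q u v => \sum_i \sum_j \sum_k \sum_l \sum_(b : bool)
      \sum_(c : bool) @ftrip R n (tm i j k l b c) p q u v).
  apply: rep_sum => i; apply: rep_sum => j; apply: rep_sum => k; apply: rep_sum => l.
  apply: rep_sum => b; apply: rep_sum => c; exact: rep1.
have Hs : forall p q u v, A p q u v = \sum_(x <- s) @ftrip R n x p q u v.
  by move=> p q u v; rewrite H Hs0.
pose d := (0 : R, 0 : 'rV[R]_n, 0 : 'rV[R]_n).
exists (size s), (fun t => (nth d s t).1.1), (fun t => (nth d s t).1.2),
  (fun t => (nth d s t).2) => i j k l.
by rewrite Hs (big_nth d) big_mkord.
Qed.
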